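(* Let $A\subseteq\mathbb{R}^2$ be a Lebesgue measurable set with $d^*(A)>0$, and let $\alpha>0$. Then there exist points $x,y,z\in A$ which form the vertices of a triangle of area $\alpha$.
   Context: $m$ is Lebesgue measure on $\mathbb{R}^2$ and $Q(x,t)$ is the closed axis-parallel square with centre $x$ and side length $t$. The upper Banach density is $d^*(A):=\limsup_{t\to\infty}\sup_{x\in\mathbb{R}^2}\frac{m(A\cap Q(x,t))}{m(Q(x,t))}$. *)

(* Defs.v *)
From HB Require Import structures.
From mathcomp Require Import all_boot all_order all_algebra.
From mathcomp Require Import all_classical all_reals all_analysis.
Set Implicit Arguments. Unset Strict Implicit. Unset Printing Implicit Defensive.
Import Order.TTheory GRing.Theory Num.Theory.
Import numFieldNormedType.Exports.
Local Open Scope classical_set_scope.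
Local Open Scope ring_scope.

Section Defs.
Context {R : realType}.

Definition plane := (measurableTypeR R * measurableTypeR R)%type.

Definition borel_m2 : set plane -> \bar R :=
  (lebesgue_measure \x lebesgue_measure)%E.

(* Lebesgue outer measure on R^2; on Lebesgue measurable sets it is
   the (complete) Lebesgue measure m *)
Definition lebesgue2 (A : set plane) : \bar R :=
  ereal_inf [set borel_m2 B | B in [set B | measurable B /\ A `<=` B]].

(* Lebesgue measurable = in the completion of the Borel product measure *)
Definition lebesgue2_measurable (A : set plane) : Prop :=
  exists B N : set plane, [/\ measurable B, measurable N, borel_m2 N = 0%E &
    (A `\` B) `|` (B `\` A) `<=` N].

Definition square (x : plane) (t : R) : set plane :=
  [set p | `|p.1 - x.1| <= t / 2 /\ `|p.2 - x.2| <= t / 2].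

Definition dens_ratio (A : set plane) (x : plane) (t : R) : \bar R :=
  (lebesgue2 (A `&` square x t) * ((fine (lebesgue2 (square x t)))^-1)%:E)%E.

Definition upper_banach_density (A : set plane) : \bar R :=
  ereal_inf [set ereal_sup [set r | exists x t, [/\ T <= t, 0 < t &
                                     r = dens_ratio A x t]] | T in [set: R]].

Definition triangle_area (x y z : plane) : R :=
  `|(y.1 - x.1) * (z.2 - x.2) - (z.1 - x.1) * (y.2 - x.2)| / 2.

End Defs.

(* Main.v *)
Require Import Defs.
From mathcomp Require Import all_boot all_order all_algebra.
From mathcomp Require Import all_classical all_reals all_analysis.
From mathcomp Require Import measurable_realfun lebesgue_integral_differentiation.
From mathcomp Require Import ring lra.
Import Order.TTheory GRing.Theory Num.Theory.
Import numFieldNormedType.Exports.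
Local Open Scope classical_set_scope.
Local Open Scope ring_scope.
Section S.
Context {R : realType}.
Local Notation mu := (@lebesgue_measure R).
Local Notation RT := (measurableTypeR R).

Lemma mu_shift (a : R) (A : set RT) : measurable A ->
  mu [set x | A (x + a)] = mu A.
Proof.
move=> mA.
pose f : RT -> RT := fun x => x + a.
have mf : measurable_fun [set: RT] f.
  apply: continuous_measurable_fun => x; apply: cvgD; [exact: cvg_id|exact: cvg_cst].
have := @lebesgue_measure_unique R (measure_function_pushforward__canonical__measure_function_Measure mu mf).
move=> /(_ _ A mA) ->//.
move=> X [[b c] _ <-] /=.
rewrite /pushforward.
have -> : f @^-1` `]b, c]%classic = `](b - a), (c - a)]%classic.
  apply/seteqP; split=> x /=; rewrite !in_itv/= ltrBlDr lerBrDr //.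
rewrite !lebesgue_measure_itv/= !lte_fin ltrD2r.
by case: ifP => // _; rewrite -!EFinD; congr EFin; ring.
Qed.

Lemma steinhaus (E : set RT) : measurable E -> (0 < mu E)%E ->
  exists2 eta : R, 0 < eta & forall a, 0 < a -> a < eta -> exists s, E s /\ E (s + a).
Proof.
move=> mE E0.
have [N [mN N0 sN]] := lebesgue_density mE.
have [y [Ey Ny]] : exists y, E y /\ ~ N y.
  apply: contrapT => H.
  have : E `<=` N by move=> x Ex; apply: contrapT => Nx; apply: H; exists x.
  move=> /(le_measure mu); rewrite !inE => /(_ mE mN) => HH.
  have K : mu N = 0%E := N0.
  have : (mu E <= 0)%E by rewrite -K.
  by rewrite leNgt E0.
have Py : (mu (E `&` ball y r) * (mu (ball y r))^-1)%E @[r --> 0^'+] --> (\1_E y)%:E.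
  by apply: contrapT => Hy; apply: Ny; apply: sN.
rewrite indicE mem_set // in Py.
have H34 : (3/4 : R) < 1 by lra.
have := Py _ (@nbhs_open_ereal_gt R 1 (fun _ => 3/4) H34).
move=> Hn.
have [r [r0 Hr]] := filter_ex (filterI (nbhs_right_gt 0) Hn).
simpl in Hr.
set F := E `&` ball y r in Hr.
have mF : measurable F by apply: measurableI => //; exact: measurable_ball.
have Fb : F `<=` ball y r by move=> x [].
have muFb : (mu F <= (r *+ 2)%:E)%E.
  rewrite -(lebesgue_measure_ball y (ltW r0)).
  by apply: le_measure => //; rewrite inE //; exact: measurable_ball.
have muF0 : (0 <= mu F)%E by apply: measure_ge0.
have finF : mu F \is a fin_num by rewrite ge0_fin_numE // (le_lt_trans muFb) // ltry.
set m := fine (mu F).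
have muFm : mu F = m%:E by rewrite fineK.
rewrite -/F muFm lebesgue_measure_ball ?ltW // inver mulrn_eq0 /= gt_eqF // -EFinM lte_fin in Hr.
have hm : 3 / 2 * r < m.
  have r2 : 0 < r *+ 2 by rewrite mulrn_wgt0.
  have := Hr; rewrite ltr_pdivlMr //.
  by rewrite mulr2n; lra.
have muFle : m <= r *+ 2 by rewrite -lee_fin -muFm.
exists (r / 2); first by lra.
move=> a a0 ar.
apply: contrapT => Hno.
pose G := [set x : RT | F (x + - a)].
have muG : mu G = mu F by apply: mu_shift.
have mG : measurable G.
  have -> : G = (fun x : RT => x + - a) @^-1` F by [].
  rewrite -[X in measurable X]setTI; apply: (_ : measurable_fun setT _) => //.
  apply: continuous_measurable_fun => x; apply: cvgD; [exact: cvg_id|exact: cvg_cst].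
have FG : F `&` G = set0.
  apply/seteqP; split => // x [[Ex _] [EG _]]; apply: Hno; exists (x - a).
  by split => //; rewrite subrK.
have FGb : F `|` G `<=` ball y (r + a).
  move=> x [[_ Bx]|[_ Bx]]; move: Bx; rewrite -!ball_normE /ball_ /=.
    by move=> H; lra.
  move=> H; have := ler_normD (y - (x + - a)) (- a).
  rewrite normrN (gtr0_norm a0) (_ : y - (x + - a) + - a = y - x); last by ring.
  by lra.
have : (mu (F `|` G) <= mu (ball y (r + a)))%E.
  apply: le_measure; rewrite ?inE //; first exact: measurableU.
  exact: measurable_ball.
rewrite (measureU _ mF mG FG) lebesgue_measure_ball; last by lra.
move=> H; have : (mu F + mu G <= ((r + a) *+ 2)%:E)%E := H.
rewrite muG muFm -EFinD lee_fin !mulr2n.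
by lra.
Qed.

Local Notation P := (@plane R).

Lemma sec_pos (B : set P) : measurable B -> (0 < borel_m2 B)%E ->
  exists c, (0 < mu (xsection B c))%E.
Proof.
move=> mB B0; apply: contrapT => H.
have : borel_m2 B = 0%E.
  rewrite /borel_m2 /product_measure1; apply: integral0_eq => x _ /=.
  apply/eqP; rewrite eq_le measure_ge0 ?andbT.
  have [Hx|//] := ltP 0%E (mu (xsection B x)).
  by exfalso; apply: H; exists x.
by move=> E; move: B0; rewrite E ltxx.
Qed.

Lemma mu_itv (a b : R) : a <= b -> mu `[a, b]%classic = (b - a)%:E.
Proof.
move=> ab; rewrite lebesgue_measure_itv /=; case: ifPn => H; first by rewrite -EFinD.
move: H; rewrite lte_fin -leNgt => ba; have -> : b = a by apply/le_anti; rewrite ba ab.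
by rewrite subrr.
Qed.

Lemma box_meas (a b c d : R) : a <= b -> c <= d ->
  borel_m2 (`[a, b]%classic `*` `[c, d]%classic) = ((b - a) * (d - c))%:E.
Proof.
move=> ab cd; rewrite /borel_m2 product_measure1E //.
change (mu `[a, b]%classic * mu `[c, d]%classic = ((b - a) * (d - c))%:E)%E.
by rewrite !mu_itv // -EFinM.
Qed.

Lemma le2_ub (A B : set P) : measurable B -> A `<=` B -> (lebesgue2 A <= borel_m2 B)%E.
Proof. by move=> mB AB; apply: ereal_inf_lbound; exists B. Qed.

Lemma le2_meas (Q : set P) : measurable Q -> lebesgue2 Q = borel_m2 Q.
Proof.
move=> mQ; apply/eqP; rewrite eq_le le2_ub //=.
apply/ereal_infP => _ [B [mB QB] <-].
rewrite /borel_m2; apply: le_measure => //; rewrite inE //.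
Qed.

Lemma sqE (x : P) (t : R) : square x t =
  `[x.1 - t / 2, x.1 + t / 2]%classic `*` `[x.2 - t / 2, x.2 + t / 2]%classic.
Proof.
apply/seteqP; split => p /=; rewrite /square /= !in_itv /=;
  by rewrite -!ler_distl.
Qed.

Lemma sq_meas (x : P) (t : R) : 0 < t -> lebesgue2 (square x t) = (t * t)%:E.
Proof.
move=> t0; rewrite le2_meas; last by rewrite sqE; apply: measurableX; exact: measurable_itv.
rewrite sqE box_meas; [|lra|lra].
have K : forall u v : R, (u + t / 2 - (u - t / 2)) * (v + t / 2 - (v - t / 2)) = t * t by move=> u v; field.
exact: (congr1 EFin (K _ _)).
Qed.

Lemma le2_ge0 (A : set P) : (0 <= lebesgue2 A)%E.
Proof. by apply/ereal_infP => _ [B _ <-]; rewrite /borel_m2; apply: measure_ge0. Qed.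

Lemma ratio_strip (A : set P) (c M : R) (x : P) (t : R) : 0 < t -> 0 <= M ->
  (forall p, A p -> `|p.1 - c| <= M) -> (dens_ratio A x t <= (M *+ 2 / t)%:E)%E.
Proof.
move=> t0 M0 HA; rewrite /dens_ratio sq_meas //=.
have H1 : (lebesgue2 (A `&` square x t) <= ((M *+ 2) * t)%:E)%E.
  have -> : ((M *+ 2) * t)%:E =
      borel_m2 (`[c - M, c + M]%classic `*` `[x.2 - t / 2, x.2 + t / 2]%classic).
    have K : forall u v : R, (M *+ 2) * t = (u + M - (u - M)) * (v + t / 2 - (v - t / 2)) by move=> u v; rewrite mulr2n; field.
    by rewrite box_meas; [exact: (congr1 EFin (K _ _))|lra|lra].
  apply: le2_ub; first by apply: measurableX; exact: measurable_itv.
  move=> p [Ap]; rewrite sqE => -[_ Hp2]; split => //=.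
  by rewrite in_itv /= -ler_distl HA.
apply: (le_trans (lee_wpmul2r _ H1)); first by rewrite lee_fin invr_ge0 mulr_ge0 // ltW.
rewrite -EFinM lee_fin.
have -> : M *+ 2 * t * (t * t)^-1 = M *+ 2 / t by field; lra.
by [].
Qed.

Lemma ratio0 (A : set P) (x : P) (t : R) : lebesgue2 (A `&` square x t) = 0%E ->
  dens_ratio A x t = 0%E.
Proof. by move=> H; rewrite /dens_ratio H mul0e. Qed.

Lemma dens_pos_e (A : set P) : (0 < upper_banach_density A)%E ->
  exists2 e : R, 0 < e & (e%:E <= upper_banach_density A)%E.
Proof.
case: (upper_banach_density A) => [r| |] //=.
- by rewrite lte_fin => r0; exists r.
- by move=> _; exists 1 => //; rewrite leey.
Qed.

Lemma far_point (A : set P) (c M : R) : (0 < upper_banach_density A)%E ->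
  exists z, A z /\ M < `|z.1 - c|.
Proof.
move=> d0; apply: contrapT => H.
have HA : forall p, A p -> `|p.1 - c| <= `|M|.
  move=> p Ap; apply: (le_trans _ (ler_norm M)); rewrite leNgt; apply/negP => Hp.
  by apply: H; exists p.
have [e e0 ed] := dens_pos_e A d0.
have M0 : 0 <= `|M| by [].
set T := (`|M| *+ 2 + 1) / e.
have T0 : 0 < T by rewrite /T divr_gt0 // ltr_wpDl // mulrn_wge0.
have : (upper_banach_density A <= (`|M| *+ 2 / T)%:E)%E.
  pose S := [set r | exists x t, [/\ T <= t, 0 < t & r = dens_ratio A x t]].
  have S1 : (upper_banach_density A <= ereal_sup S)%E.
    by apply: ereal_inf_lbound; exists T.
  apply: (le_trans S1).
  apply: ge_ereal_sup => _ [x [t [Tt t0 ->]]].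
  apply: (le_trans (ratio_strip A c `|M| x t t0 M0 HA)); rewrite lee_fin.
  apply: ler_wpM2l; first exact: mulrn_wge0.
  by rewrite lef_pV2 // posrE // (lt_le_trans T0).
move=> /(le_trans ed); rewrite lee_fin /T invf_div.
have : `|M| *+ 2 * (e / (`|M| *+ 2 + 1)) < e.
  rewrite mulrA ltr_pdivrMr; last by rewrite ltr_wpDl // mulrn_wge0.
  rewrite mulrC ltr_pM2l //; lra.
by move=> h1 h2; move: (le_lt_trans h2 h1); rewrite ltxx.
Qed.

Lemma pos_subset (A : set P) : lebesgue2_measurable A ->
  (0 < upper_banach_density A)%E ->
  exists B, [/\ measurable B, B `<=` A & (0 < borel_m2 B)%E].
Proof.
move=> [B [N [mB mN N0 sBN]]] d0.
have mBN : measurable (B `\` N) by apply: measurableD.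
exists (B `\` N); split => //.
  move=> p [Bp Np]; apply: contrapT => Ap; apply: Np; apply: sBN; right; by split.
have hge : (0 <= borel_m2 (B `\` N))%E by rewrite /borel_m2; apply: measure_ge0.
rewrite lt_def hge andbT; apply/negP => /eqP H0.
have AU : A `<=` (B `\` N) `|` N.
  move=> p Ap; have [Np|Np] := pselect (N p); first by right.
  left; split => //; apply: contrapT => Bp; apply: Np; apply: sBN; left; by split.
have L0 : forall x t, lebesgue2 (A `&` square x t) = 0%E.
  move=> x t; apply/eqP; rewrite eq_le le2_ge0 andbT.
  have mU : measurable (B `\` N `|` N) by apply: measurableU.
  apply: (le_trans (le2_ub (A `&` square x t) _ mU (fun p hp => AU p hp.1))).
  have U2 : (borel_m2 (B `\` N `|` N) <= borel_m2 (B `\` N) + borel_m2 N)%E := measureU2 (lebesgue_measure \x lebesgue_measure)%E mBN mN.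
  by rewrite H0 N0 adde0 in U2.
have : (upper_banach_density A <= 0)%E.
  pose S := [set r | exists x t, [/\ 0 <= t, 0 < t & r = dens_ratio A x t]].
  have S1 : (upper_banach_density A <= ereal_sup S)%E.
    by apply: ereal_inf_lbound; exists 0.
  apply: (le_trans S1); apply: ge_ereal_sup => _ [x [t [_ _ ->]]].
  by rewrite ratio0.
by rewrite leNgt d0.
Qed.
End S.

Theorem corollary1p8 (R : realType) (A : set (@plane R)) (alpha : R) :
  lebesgue2_measurable A ->
  (0 < upper_banach_density A)%E ->
  0 < alpha ->
  exists x y z, [/\ A x, A y, A z & triangle_area x y z = alpha].
Proof.
move=> mA d0 a0.
have [B [mB BA B0]] := pos_subset A mA d0.
have [c c0] := sec_pos B mB B0.
have mE : measurable (xsection B c) by apply: measurable_xsection.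
have [eta eta0 Heta] := steinhaus _ mE c0.
have [z [Az Dz]] := far_point A c (2 * alpha / eta) d0.
set D := `|z.1 - c| in Dz.
have a2 : 0 < 2 * alpha by lra.
have D0 : 0 < D := lt_trans (divr_gt0 a2 eta0) Dz.
have [s [Es Esa]] : exists s, xsection B c s /\ xsection B c (s + 2 * alpha / D).
  apply: Heta; first by apply: divr_gt0 => //; lra.
  by rewrite ltr_pdivrMr // (mulrC eta) -ltr_pdivrMr.
exists (c, s), (c, s + 2 * alpha / D), z; split.
- by apply: BA; move: Es; rewrite /xsection /= inE.
- by apply: BA; move: Esa; rewrite /xsection /= inE.
- exact: Az.
rewrite /triangle_area /=.
have K : forall (c1 w v s0 : R), 0 < `|v| ->
    `|(c1 - c1) * w - v * (s0 + 2 * alpha / `|v| - s0)| / 2 = alpha.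
  move=> c1 w v s0 hv.
  rewrite subrr mul0r sub0r normrN (addrC s0) addrK normrM (gtr0_norm (divr_gt0 a2 hv)).
  field; exact: lt0r_neq0.
exact: K.
Qed.
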